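(* Let $\Gamma$ be a group, $\alpha\in\mathrm{Aut}(\Gamma)$ and $a\in K(\alpha)$. Then the set $\{x\in\mathbb Q_2: a(x)\neq e_\Gamma\}$ is dense in $\mathrm{supp}(a)$.
   Context: $\{0,1\}^*$ denotes the finite words over $\{0,1\}$ (including the empty word), $|u|$ the length; $\mathfrak C=\{0,1\}^{\mathbb N}$ with the product topology; $\mathbb Q_2\subset\mathfrak C$ the eventually-zero sequences $u00\cdots$. $K(\alpha)$ is the group of maps $a:\{0,1\}^*\to\Gamma$ with $a(u)=\alpha(a(u0))$ for all $u$. For $x\in\mathbb Q_2$ one sets $a(x):=\alpha^{|u|}(a(u))$ where $x=u00\cdots$ (independent of the choice of $u$). The support is $\mathrm{supp}(a):=\{x=x_0x_1\cdots\in\mathfrak C:\ \text{for every } m\ge0 \text{ the map } w\mapsto a(x_0\cdots x_mw),\ w\in\{0,1\}^*, \text{ is not identically } e_\Gamma\}$. *)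

(* Defs.v *)
From HB Require Import structures.
From mathcomp Require Import all_boot all_order all_algebra.
From mathcomp Require Import all_classical all_reals all_analysis.
From mathcomp Require Import monoid.
Set Implicit Arguments. Unset Strict Implicit. Unset Printing Implicit Defensive.
Local Open Scope classical_set_scope.
Local Open Scope group_scope.

(* Finite words over {0,1} are [seq bool], with 0 = false, 1 = true.
   The Cantor space C = {0,1}^N is [cantor_space] (product topology). *)

Definition is_automorphism (G : groupType) (alpha : G -> G) : Prop :=
  monoid_morphism alpha /\ bijective alpha.

Definition in_K (G : groupType) (alpha : G -> G) (a : seq bool -> G) : Prop :=
  forall u : seq bool, a u = alpha (a (rcons u false)).

Definition word_to_seq (u : seq bool) : cantor_space := fun n => nth false u n.

Definition Q2 : set cantor_space := [set x | exists u, x = word_to_seq u].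

(* a(x) = alpha^{|u|}(a u) for x = u00... (a relation; independent of u). *)
Definition a_at (G : groupType) (alpha : G -> G) (a : seq bool -> G)
  (x : cantor_space) (g : G) : Prop :=
  exists u, x = word_to_seq u /\ g = iter (size u) alpha (a u).

Definition nontrivial_points (G : groupType) (alpha : G -> G) (a : seq bool -> G)
  : set cantor_space :=
  [set x | Q2 x /\ exists g, a_at alpha a x g /\ g <> 1].

Definition supp (G : groupType) (a : seq bool -> G) : set cantor_space :=
  [set x | forall m : nat, exists w : seq bool, a (mkseq x m.+1 ++ w) <> 1].

(* Main.v *)
Require Import Defs.
From HB Require Import structures.
From mathcomp Require Import all_boot all_order all_algebra.
From mathcomp Require Import all_classical all_reals all_analysis.
From mathcomp Require Import monoid.
Local Open Scope classical_set_scope.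

Lemma cyl_cvg (x : cantor_space) (g : nat -> cantor_space) :
  (forall N i, (i <= N)%N -> g N i = x i) -> g @ \oo --> x.
Proof.
move=> H.
apply/cvg_sup => N U [V] [[W] oW <-] WfN WU.
apply: (filterS WU); rewrite nbhs_simpl; exists N => // i /= Ni.
by rewrite /= H.
Qed.

Lemma iter_mor (G : groupType) (alpha : G -> G) n :
  alpha 1%g = 1%g -> iter n alpha 1%g = 1%g.
Proof. by move=> h; elim: n => //= n ->. Qed.


Lemma a_nseq (G : groupType) (alpha : G -> G) (a : seq bool -> G) u k :
  in_K alpha a -> a u = iter k alpha (a (u ++ nseq k false)).
Proof.
move=> ha; elim: k u => [|k IH] u; first by rewrite cats0.
by rewrite ha (IH (rcons u false)) iterS -cats1 -catA.
Qed.

Theorem mainTheorem10 (G : groupType) (alpha : G -> G) (a : seq bool -> G)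
  (halpha : is_automorphism alpha) (ha : in_K alpha a) :
  nontrivial_points alpha a `<=` supp a /\
  supp a `<=` closure (nontrivial_points alpha a).
Proof.
have [[a1 _] [beta ab ba]] := halpha.
have ainj : injective alpha by exact: can_inj ab.
split.
- move=> x [_ [g [[u [-> ->]] gne]]] m.
  have au : a u <> 1%g by move=> h; apply: gne; rewrite h iter_mor.
  pose v := u ++ nseq m.+1 false.
  have av : a v <> 1%g.
    by move=> h; apply: au; rewrite (@a_nseq _ alpha a u m.+1 ha) -/v h iter_mor.
  exists (drop m.+1 v).
  suff -> : mkseq (word_to_seq u) m.+1 = take m.+1 v by rewrite cat_take_drop.
  apply: (@eq_from_nth _ false).
    by rewrite size_mkseq size_takel // /v size_cat size_nseq leq_addl.
  move=> i; rewrite size_mkseq => im.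
  rewrite nth_mkseq // nth_take // /word_to_seq /v nth_cat.
  case: ltnP => // ui; rewrite nth_nseq nth_default //; by case: ifP.
- move=> x xs.
  pose w N := projT1 (cid (xs N)).
  have wP N : a (mkseq x N.+1 ++ w N) <> 1%g := projT2 (cid (xs N)).
  pose g N : cantor_space := word_to_seq (mkseq x N.+1 ++ w N).
  have gcvg : g @ \oo --> x.
    apply: cyl_cvg => N i iN.
    by rewrite /g /word_to_seq nth_cat size_mkseq ltnS iN nth_mkseq.
  move=> B /gcvg [N _ HN].
  exists (g N); split; last by apply: HN => /=.
  split; first by exists (mkseq x N.+1 ++ w N).
  exists (iter (size (mkseq x N.+1 ++ w N)) alpha (a (mkseq x N.+1 ++ w N))).
  split; first by exists (mkseq x N.+1 ++ w N).
  move=> h; apply: (wP N).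
  move: h; elim: (size (mkseq x N.+1 ++ w N)) => //= n IH.
  by move=> h; apply: IH; apply: ainj; rewrite h a1.
Qed.
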